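(* Let $\mathbb{K}$ be a field, $m\ge 3$, $R=\mathbb{K}[T_1,\dots,T_m]$, $\mathbf{b}=(b_1,\dots,b_m)\in\mathbb{N}^m$ with $b_i\ne0$ for at least two $i$, $|\mathbf{b}|=\sum b_i$, and $I=\langle T_1^{|\mathbf{b}|},\dots,T_m^{|\mathbf{b}|},T_1^{b_1}\cdots T_m^{b_m}\rangle$ (the equi-generated case). Let $L\subset S=R[X_1,\dots,X_m,W]$ be the defining ideal of the Rees algebra of $I$ and $L_1$ its component of degree one in $X_1,\dots,X_m,W$. If $\ell\in\mathbb{Z}$ satisfies $\ell\ge\frac{(m-1)(|\mathbf{b}|-1)}{m}$, then $L_1S:(T_1T_2\cdots T_m)^{\ell}=L$. In particular, $L_1S:(T_1T_2\cdots T_m)^{|\mathbf{b}|}=L$.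
   Context: $L$ is the kernel of the $R$-algebra map $S\to R[Z]$ given by $X_i\mapsto T_i^{|\mathbf{b}|}Z$ and $W\mapsto T_1^{b_1}\cdots T_m^{b_m}Z$; it is graded by total degree in $X_1,\dots,X_m,W$. *)

(* Defs.v *)
From HB Require Import structures.
From mathcomp Require Import all_boot all_order all_algebra.
From mathcomp Require Import mpoly.
Set Implicit Arguments. Unset Strict Implicit. Unset Printing Implicit Defensive.
Import GRing.Theory.
Local Open Scope ring_scope.

(* Variables of S = K[T_1..T_m, X_1..X_m, W] are indexed by 'I_(m + m).+1:
   T_i  is index i        (0 <= i < m),
   X_i  is index m + i    (0 <= i < m),
   W    is index m + m. *)
Definition tvar (m : nat) (i : 'I_m) : 'I_(m + m).+1 := inord i.
Definition xvar (m : nat) (i : 'I_m) : 'I_(m + m).+1 := inord (m + i).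
Definition wvar (m : nat) : 'I_(m + m).+1 := inord (m + m).

Notation Sring K m := {mpoly K[(m + m).+1]}.
(* The ring R[Z] = K[T_1..T_m, Z]; T_i is index i, Z is index m. *)
Notation RZring K m := {mpoly K[m.+1]}.

Definition Tz (K : fieldType) (m : nat) (j : nat) : RZring K m := 'X_(inord j).
Definition Zz (K : fieldType) (m : nat) : RZring K m := 'X_(ord_max).

Definition bsum (m : nat) (b : 'I_m -> nat) : nat := (\sum_(i < m) b i)%N.

Definition rees_img (K : fieldType) (m : nat) (b : 'I_m -> nat)
    (j : 'I_(m + m).+1) : RZring K m :=
  if (j < m)%N then Tz K m j
  else if (j < m + m)%N then Tz K m (j - m) ^+ bsum b * Zz K m
  else (\prod_(i < m) Tz K m i ^+ b i) * Zz K m.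

Definition rees_map (K : fieldType) (m : nat) (b : 'I_m -> nat) (p : Sring K m)
    : RZring K m :=
  comp_mpoly [tuple rees_img K b j | j < (m + m).+1] p.

Definition reesL (K : fieldType) (m : nat) (b : 'I_m -> nat) (p : Sring K m) : Prop :=
  rees_map b p = 0.

Definition xwdeg (m : nat) (mon : 'X_{1..(m + m).+1}) : nat :=
  ((\sum_(i < m) mon (xvar i)) + mon (wvar m))%N.

Definition xw_homog (K : fieldType) (m d : nat) (p : Sring K m) : Prop :=
  forall mon, mon \in msupp p -> xwdeg mon = d.

Definition reesL1 (K : fieldType) (m : nat) (b : 'I_m -> nat) (p : Sring K m) : Prop :=
  reesL b p /\ xw_homog 1 p.

Definition in_ideal_gen (K : fieldType) (m : nat) (P : Sring K m -> Prop)
    (g : Sring K m) : Prop :=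
  exists s : seq (Sring K m * Sring K m),
    (forall x, x \in s -> P x.2) /\ g = \sum_(x <- s) x.1 * x.2.

Definition in_colon (K : fieldType) (m : nat) (P : Sring K m -> Prop)
    (f g : Sring K m) : Prop :=
  in_ideal_gen P (g * f).

Definition Tprod (K : fieldType) (m : nat) : Sring K m := \prod_(i < m) 'X_(tvar i).

(* Main.v *)
Require Import Defs.
From HB Require Import structures.
From mathcomp Require Import all_boot all_order all_algebra.
From mathcomp Require Import mpoly.
From mathcomp Require Import zify.
Import GRing.Theory.
Set Implicit Arguments. Unset Strict Implicit.
Local Open Scope ring_scope.

From Stdlib Require Import ClassicalEpsilon.
Section Coords.
Variables (K : fieldType) (m : nat) (b : 'I_m -> nat).
Local Notation n2 := (m + m).+1.
Local Notation B := (bsum b).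

Definition mk (t x : nat -> nat) (w : nat) : 'X_{1..n2} :=
  [multinom (if (j < m)%N then t j else if (j < m + m)%N then x (j - m)%N else w) | j < n2].

Lemma tvarE (i : 'I_m) : (tvar i : nat) = i.
Proof. rewrite /tvar inordK //; have := ltn_ord i; lia. Qed.
Lemma xvarE (i : 'I_m) : (xvar i : nat) = (m + i)%N.
Proof. rewrite /xvar inordK //; have := ltn_ord i; lia. Qed.
Lemma wvarE : (wvar m : nat) = (m + m)%N.
Proof. by rewrite /wvar inordK. Qed.

Lemma mk_t t x w (i : 'I_m) : mk t x w (tvar i) = t i.
Proof. by rewrite mnmE tvarE ltn_ord. Qed.
Lemma mk_x t x w (i : 'I_m) : mk t x w (xvar i) = x i.
Proof.
rewrite mnmE xvarE; have := ltn_ord i => h.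
rewrite ifF; last lia. rewrite ifT; last lia. by rewrite addKn.
Qed.
Lemma mk_w t x w : mk t x w (wvar m) = w.
Proof. rewrite mnmE wvarE ifF; last lia. by rewrite ifF //; lia. Qed.

Lemma mkK (U : 'X_{1..n2}) :
  mk (fun i => U (inord i)) (fun i => U (inord (m + i))) (U (inord (m + m))) = U.
Proof.
apply/mnmP => j; rewrite mnmE; have := ltn_ord j => hj.
case: ifP => h1; first by rewrite inord_val.
case: ifP => h2; congr (U _); apply: val_inj; rewrite /= inordK //; lia.
Qed.

Lemma mk_eq t x w t' x' w' :
  (forall k, (k < m)%N -> t k = t' k) -> (forall k, (k < m)%N -> x k = x' k) ->
  w = w' -> mk t x w = mk t' x' w'.
Proof.
move=> ht hx ->; apply/mnmP => j; rewrite !mnmE.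
case: ifP => h1; first exact: ht.
case: ifP => h2 //; apply: hx; lia.
Qed.

Lemma mkD t x w t' x' w' :
  (mk t x w + mk t' x' w')%MM =
  mk (fun k => t k + t' k)%N (fun k => x k + x' k)%N (w + w')%N.
Proof.
apply/mnmP => j; rewrite mnmDE !mnmE.
by case: ifP => h1 //; case: ifP.
Qed.

Definition mimg (j : 'I_n2) : 'X_{1..m.+1} :=
  if (j < m)%N then U_(inord j)%MM
  else if (j < m + m)%N then (U_(inord (j - m)) *+ B + U_(ord_max))%MM
  else ((\sum_(i < m) U_(inord i) *+ b i) + U_(ord_max))%MM.

Lemma rees_img_X j : rees_img K b j = 'X_[mimg j].
Proof.
rewrite /rees_img /mimg; case: ifP => _ //.
case: ifP => _; first by rewrite /Tz /Zz mpolyXn -mpolyXD.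
by rewrite mpolyXD /Tz /Zz mprodXnE.
Qed.

Definition PhiM (U : 'X_{1..n2}) : 'X_{1..m.+1} :=
  (\sum_(j < n2) mimg j *+ U j)%MM.

Lemma rees_mapX U : rees_map b ('X_[U] : Sring K m) = 'X_[PhiM U].
Proof.
rewrite /rees_map comp_mpolyX.
rewrite (eq_bigr (fun j => 'X_[mimg j] ^+ U j)) => [|j _]; last first.
  by rewrite tnth_mktuple rees_img_X.
by rewrite mprodXnE.
Qed.

Lemma PhiM_coord U k' : PhiM U k' = (\sum_(j < n2) mimg j k' * U j)%N.
Proof. by rewrite /PhiM mnm_sumE; apply: eq_bigr => j _; rewrite mulmnE. Qed.

Lemma sum_split3 (F : 'I_n2 -> nat) :
  (\sum_(j < n2) F j = \sum_(i < m) F (tvar i) + \sum_(i < m) F (xvar i) + F (wvar m))%N.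
Proof.
rewrite big_ord_recr /= big_split_ord /=.
congr (_ + _ + _)%N.
- by apply: eq_bigr => i _; congr F; apply: val_inj; rewrite /= tvarE.
- by apply: eq_bigr => i _; congr F; apply: val_inj; rewrite /= xvarE.
- by congr F; apply: val_inj; rewrite /= wvarE.
Qed.


Lemma eq_inord_I (i k : 'I_m) : (inord i == inord k :> 'I_m.+1) = (i == k).
Proof.
apply/eqP/eqP => [h|->] //; apply: val_inj; move/(f_equal val): h.
by rewrite /= !inordK // ltnS ltnW.
Qed.

Lemma inord_max (i : 'I_m) : (ord_max == inord i :> 'I_m.+1) = false.
Proof.
apply/negbTE/eqP => /(f_equal val) /=.
have hi := ltn_ord i; rewrite inordK; first lia.
by apply: leqW.
Qed.

Lemma sum_delta (F : 'I_m -> nat) (k : 'I_m) :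
  (\sum_(i < m) (i == k) * F i = F k)%N.
Proof.
rewrite (bigD1 k) //= eqxx mul1n big1 ?addn0 // => i /negbTE ->; by rewrite mul0n.
Qed.

Lemma mimg_t (i : 'I_m) : mimg (tvar i) = U_(inord i)%MM.
Proof. by rewrite /mimg tvarE ltn_ord. Qed.
Lemma mimg_x (i : 'I_m) : mimg (xvar i) = (U_(inord i) *+ B + U_(ord_max))%MM.
Proof.
rewrite /mimg xvarE; have := ltn_ord i => h.
rewrite ifF; last lia. rewrite ifT; last lia. by rewrite addKn.
Qed.
Lemma mimg_w : mimg (wvar m) = ((\sum_(i < m) U_(inord i) *+ b i) + U_(ord_max))%MM.
Proof. rewrite /mimg wvarE ifF; last lia. by rewrite ifF //; lia. Qed.

Definition phiT (t x : nat -> nat) (w : nat) (k : 'I_m) := (t k + B * x k + b k * w)%N.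
Definition phiZ (x : nat -> nat) (w : nat) := (\sum_(i < m) x i + w)%N.

Lemma PhiM_T t x w (k : 'I_m) : PhiM (mk t x w) (inord k) = phiT t x w k.
Proof.
rewrite PhiM_coord sum_split3 /phiT.
congr (_ + _ + _)%N.
- under eq_bigr do rewrite mimg_t mnm1E eq_inord_I mk_t.
  by rewrite sum_delta.
- rewrite (eq_bigr (fun i => B * ((i == k) * x i))%N) => [|i _]; last first.
    rewrite mimg_x mnmDE mulmnE !mnm1E eq_inord_I inord_max mk_x /=.
    by case: (i == k); rewrite /= ?mul0n ?mul1n ?muln0 ?addn0 // mulnC.
  by rewrite -big_distrr /= sum_delta.
- rewrite mimg_w mk_w mnmDE mnm1E inord_max addn0 mnm_sumE; congr (_ * _)%N.
  under eq_bigr do rewrite mulmnE mnm1E eq_inord_I.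
  by rewrite sum_delta.
Qed.

Lemma PhiM_Z t x w : PhiM (mk t x w) ord_max = phiZ x w.
Proof.
rewrite PhiM_coord sum_split3 /phiZ.
rewrite big1 ?add0n => [|i _]; last first.
  by rewrite mimg_t mnm1E eq_sym inord_max.
congr (_ + _)%N.
- apply: eq_bigr => i _.
  by rewrite mimg_x mnmDE mulmnE !mnm1E eq_sym inord_max eqxx mk_x mul0n add0n mul1n.
- rewrite mimg_w mk_w mnmDE mnm1E eqxx mnm_sumE big1 ?add0n ?mul1n // => i _.
  by rewrite mulmnE mnm1E eq_sym inord_max.
Qed.

Lemma PhiM_eq t x w t' x' w' :
  (forall k, phiT t x w k = phiT t' x' w' k) -> phiZ x w = phiZ x' w' ->
  PhiM (mk t x w) = PhiM (mk t' x' w').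
Proof.
move=> hT hZ; apply/mnmP => k'.
have [->|ne] := eqVneq k' ord_max; first by rewrite !PhiM_Z.
have lt : (k' < m)%N.
  have := ltn_ord k'; move: ne => /eqP ne; have : (k' : nat) <> m.
    by move=> h; apply: ne; apply: val_inj.
  lia.
have -> : k' = inord (Ordinal lt) by apply: val_inj; rewrite /= inordK // ltnS ltnW.
by rewrite !PhiM_T.
Qed.

Lemma PhiM_eqE t x w t' x' w' :
  PhiM (mk t x w) = PhiM (mk t' x' w') ->
  (forall k, phiT t x w k = phiT t' x' w' k) /\ phiZ x w = phiZ x' w'.
Proof. by move=> h; split => [k|]; [rewrite -!PhiM_T h | rewrite -(PhiM_Z t) -(PhiM_Z t') h]. Qed.

Lemma xwdeg_mk t x w : xwdeg (mk t x w) = phiZ x w.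
Proof. by rewrite /xwdeg /phiZ mk_w; under eq_bigr do rewrite mk_x. Qed.

End Coords.

Section Ideal.
Variables (K : fieldType) (m : nat) (b : 'I_m -> nat).
Local Notation n2 := (m + m).+1.
Local Notation B := (bsum b).
Local Notation S := (Sring K m).

Lemma ideal0 (P : S -> Prop) : in_ideal_gen P 0.
Proof. by exists [::]; split => //; rewrite big_nil. Qed.

Lemma idealD (P : S -> Prop) p q : in_ideal_gen P p -> in_ideal_gen P q -> in_ideal_gen P (p + q).
Proof.
move=> [s [hs ->]] [s' [hs' ->]]; exists (s ++ s'); split; last by rewrite big_cat.
by move=> x; rewrite mem_cat => /orP[/hs|/hs'].
Qed.

Lemma idealM (P : S -> Prop) r p : in_ideal_gen P p -> in_ideal_gen P (r * p).
Proof.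
move=> [s [hs ->]]; exists (map (fun x => (r * x.1, x.2)) s); split.
  by move=> x /mapP [y /hs hy ->].
by rewrite big_map mulr_sumr; apply: eq_bigr => x _; rewrite mulrA.
Qed.

Lemma idealN (P : S -> Prop) p : in_ideal_gen P p -> in_ideal_gen P (- p).
Proof. by move=> h; rewrite -mulN1r; apply: idealM. Qed.

Lemma idealG (P : S -> Prop) p : P p -> in_ideal_gen P p.
Proof.
move=> h; exists [:: (1, p)]; split; first by move=> x; rewrite inE => /eqP ->.
by rewrite big_seq1 mul1r.
Qed.

Lemma ideal_sum (P : S -> Prop) (I : eqType) (r : seq I) (F : I -> S) :
  (forall i, i \in r -> in_ideal_gen P (F i)) -> in_ideal_gen P (\sum_(i <- r) F i).
Proof.
elim: r => [|i r ih] h; first by rewrite big_nil; apply: ideal0.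
rewrite big_cons; apply: idealD; first by apply: h; rewrite inE eqxx.
by apply: ih => j hj; apply: h; rewrite inE hj orbT.
Qed.

Definition eqm (U V : 'X_{1..n2}) := in_ideal_gen (reesL1 b) ('X_[U] - 'X_[V] : S).

Lemma eqm_refl U : eqm U U.
Proof. by rewrite /eqm subrr; apply: ideal0. Qed.

Lemma eqm_sym U V : eqm U V -> eqm V U.
Proof. by move=> h; rewrite /eqm -opprB; apply: idealN. Qed.

Lemma eqm_trans U V W : eqm U V -> eqm V W -> eqm U W.
Proof.
move=> h1 h2; have := idealD h1 h2; by rewrite addrA subrK.
Qed.

Lemma rees_mapB (p q : S) : rees_map b (p - q) = rees_map b p - rees_map b q.
Proof. exact: comp_mpolyB. Qed.

Lemma eqm_gen A Bm C : PhiM b A = PhiM b Bm -> xwdeg A = 1%N -> xwdeg Bm = 1%N ->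
  eqm (A + C)%MM (Bm + C)%MM.
Proof.
move=> hP hA hB; rewrite /eqm !mpolyXD -mulrBl mulrC; apply: idealM; apply: idealG.
split; first by rewrite /reesL rees_mapB !rees_mapX hP subrr.
by move=> mon /msuppB_le; rewrite mem_cat !msuppX !inE => /orP[]/eqP->.
Qed.

Section Tgen.
Variables (t x : nat -> nat) (w : nat) (tA xA : nat -> nat) (wA : nat)
  (tB xB : nat -> nat) (wB : nat) (t' x' : nat -> nat) (w' : nat).
Hypotheses (hphi : forall k, phiT b tA xA wA k = phiT b tB xB wB k)
  (hZA : phiZ m xA wA = 1%N) (hZB : phiZ m xB wB = 1%N)
  (hlet : forall k, (k < m)%N -> (tA k <= t k)%N)
  (hlex : forall k, (k < m)%N -> (xA k <= x k)%N) (hlew : (wA <= w)%N)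
  (ht' : forall k, (k < m)%N -> t' k = (t k - tA k + tB k)%N)
  (hx' : forall k, (k < m)%N -> x' k = (x k - xA k + xB k)%N)
  (hw' : w' = (w - wA + wB)%N).

Lemma tgen_eqm : eqm (mk m t x w) (mk m t' x' w').
Proof.
pose C := mk m (fun k => t k - tA k)%N (fun k => x k - xA k)%N (w - wA)%N.
have -> : mk m t x w = (mk m tA xA wA + C)%MM.
  rewrite mkD; apply: mk_eq => [k hk|k hk|]; [have := hlet hk|have := hlex hk|]; lia.
have -> : mk m t' x' w' = (mk m tB xB wB + C)%MM.
  rewrite mkD; apply: mk_eq => [k hk|k hk|]; [rewrite ht' //; have := hlet hk|rewrite hx' //; have := hlex hk|]; lia.
apply: eqm_gen; [apply: PhiM_eq => //; by rewrite hZA hZB | by rewrite xwdeg_mk | by rewrite xwdeg_mk].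
Qed.

Lemma tgen_phiT k : phiT b t' x' w' k = phiT b t x w k.
Proof.
have := hphi k; rewrite /phiT ht' ?hx' ?hw' //.
have := hlet (ltn_ord k); have := hlex (ltn_ord k).
move: (t k) (tA k) (tB k) (x k) (xA k) (xB k) => a aA aB c cA cB.
move=> hc ha.
rewrite -(subnK hc) -(subnK ha) -(subnK hlew).
move: (c - cA)%N (a - aA)%N (w - wA)%N => c' a' w0.
rewrite !addnK; nia.
Qed.

Lemma tgen_phiZ : phiZ m x' w' = phiZ m x w.
Proof.
move: hZA hZB; rewrite /phiZ => h1 h2.
have e : (\sum_(i < m) x' i + \sum_(i < m) xA i = \sum_(i < m) x i + \sum_(i < m) xB i)%N.
  rewrite -!big_split; apply: eq_bigr => i _ /=; rewrite hx' //; have := hlex (ltn_ord i); lia.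
rewrite hw'; lia.
Qed.

End Tgen.
End Ideal.

Section Comb.
Variables (K : fieldType) (m : nat) (b : 'I_m -> nat).
Local Notation n2 := (m + m).+1.
Local Notation B := (bsum b).
Local Open Scope nat_scope.

Lemma sum_lt (f g : 'I_m -> nat) (i : 'I_m) :
  (forall k, f k <= g k) -> f i < g i -> \sum_(k < m) f k < \sum_(k < m) g k.
Proof.
move=> h hi; rewrite (bigD1 i) //= [X in _ < X](bigD1 i) //=.
rewrite -addSn; apply: leq_add => //; apply: leq_sum => k _; exact: h k.
Qed.

Lemma sum_ind (i : 'I_m) : \sum_(k < m) ((k : nat) == i) = 1.
Proof.
rewrite (bigD1 i) //= eqxx big1 // => k /negbTE.
by rewrite val_eqE => ->.
Qed.

Lemma sum_const1 : \sum_(k < m) 1 = m.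
Proof. by rewrite sum_nat_const card_ord muln1. Qed.

Lemma b_le (i : 'I_m) : b i <= B.
Proof. by rewrite /bsum (bigD1 i) //= leq_addr. Qed.

Lemma sumT (t x : nat -> nat) w : \sum_(k < m) phiT b t x w k = \sum_(k < m) t k + B * phiZ m x w.
Proof.
rewrite /phiT /phiZ !big_split /= -big_distrr -big_distrl /= -/(bsum b).
rewrite mulnDr; lia.
Qed.

Lemma xconn0 (t x t' x' : nat -> nat) :
  (forall k : 'I_m, x k <= x' k) ->
  (forall k, phiT b t x 0 k = phiT b t' x' 0 k) -> phiZ m x 0 = phiZ m x' 0 ->
  eqm K b (mk m t x 0) (mk m t' x' 0).
Proof.
move=> hle hT hZ.
have ex : forall k : 'I_m, x k = x' k.
  move=> k; apply/eqP; rewrite eqn_leq hle /=; rewrite leqNgt; apply/negP => hk.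
  have := @sum_lt (fun k : 'I_m => x k) (fun k : 'I_m => x' k) k hle hk; move: hZ; rewrite /phiZ; lia.
have -> : mk m t x 0 = mk m t' x' 0; last exact: eqm_refl.
apply: mk_eq => // k hk; last exact: (ex (Ordinal hk)).
have := hT (Ordinal hk); have := ex (Ordinal hk); rewrite /phiT /=; lia.
Qed.

Lemma xconn n : forall (t x t' x' : nat -> nat),
  \sum_(k < m) (x k - x' k) <= n ->
  (forall k, phiT b t x 0 k = phiT b t' x' 0 k) -> phiZ m x 0 = phiZ m x' 0 ->
  eqm K b (mk m t x 0) (mk m t' x' 0).
Proof.
elim: n => [|n IH] t x t' x' hn hT hZ.
  apply: xconn0 hT hZ => k; move: hn; rewrite leqn0 => /eqP h.
  case: (leqP (x k) (x' k)) => // hk.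
  have := @sum_lt (fun _ : 'I_m => 0) (fun i : 'I_m => x i - x' i) k (fun i => leq0n _).
  rewrite big1 // h; lia.
case: (boolP [exists i : 'I_m, x' i < x i]) => [/existsP [i hi]|/existsPn hn']; last first.
  by apply: xconn0 hT hZ => k; have := hn' k; rewrite -leqNgt.
case: (boolP [exists j : 'I_m, x j < x' j]) => [/existsP [j hj]|/existsPn hn']; last first.
  have hle : forall k : 'I_m, x' k <= x k by move=> k; have := hn' k; rewrite -leqNgt.
  have := @sum_lt (fun k : 'I_m => x' k) (fun k : 'I_m => x k) i hle hi; move: hZ; rewrite /phiZ; lia.
have hij : (i : nat) != j by apply/eqP => e; move: hi hj; rewrite e; lia.
have htj : B <= t j.
  have := hT j; rewrite /phiT.
  have : B * (x j).+1 <= B * x' j by exact: leq_mul (leqnn B) hj.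
  rewrite mulnS; lia.
pose tA := fun k : nat => B * (k == j). pose xA := fun k : nat => (k == i) : nat.
pose tB := fun k : nat => B * (k == i). pose xB := fun k : nat => (k == j) : nat.
pose t1 := fun k => t k - tA k + tB k. pose x1 := fun k => x k - xA k + xB k.
have hphi : forall k, phiT b tA xA 0 k = phiT b tB xB 0 k by move=> k; rewrite /phiT /tA /xA /tB /xB; lia.
have hZA : phiZ m xA 0 = 1 by rewrite /phiZ addn0 sum_ind.
have hZB : phiZ m xB 0 = 1 by rewrite /phiZ addn0 sum_ind.
have hlet : forall k, k < m -> tA k <= t k.
  by move=> k _; rewrite /tA; case: eqP => [->|_]; rewrite ?muln1 ?muln0.
have hlex : forall k, k < m -> xA k <= x k.
  by move=> k _; rewrite /xA; case: eqP => [->|_] //=; lia.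
have hlew : 0 <= 0 by [].
have ht1 : forall k, k < m -> t1 k = t k - tA k + tB k by [].
have hx1 : forall k, k < m -> x1 k = x k - xA k + xB k by [].
have hw1 : 0 = 0 - 0 + 0 by [].
apply: eqm_trans (tgen_eqm K hphi hZA hZB hlet hlex hlew ht1 hx1 hw1) _.
apply: IH.
- have e : forall k : 'I_m, x1 k - x' k + ((k : nat) == i) = x k - x' k.
    move=> k; rewrite /x1 /xA /xB.
    case: (eqVneq (k : nat) i) => [e|ne].
      have : (k : nat) != j by rewrite e.
      move/negbTE => ->; rewrite e /=; lia.
    case: (eqVneq (k : nat) j) => [e|ne'] /=; first (rewrite e; lia).
    lia.
  have e2 : \sum_(k < m) (x1 k - x' k) + \sum_(k < m) ((k : nat) == i) = \sum_(k < m) (x k - x' k).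
    by rewrite -big_split; apply: eq_bigr => k _; exact: e k.
  move: e2; rewrite sum_ind; lia.
- by move=> k; rewrite (tgen_phiT hphi hZA hZB hlet hlex hlew ht1 hx1 hw1).
- by rewrite (tgen_phiZ hZA hZB hlex hlew hx1 hw1).
Qed.

End Comb.

Section Comb2.
Variables (K : fieldType) (m : nat) (b : 'I_m -> nat).
Local Notation n2 := (m + m).+1.
Local Notation B := (bsum b).
Local Open Scope nat_scope.

Lemma wrem (hm : 0 < m) w : forall (t x : nat -> nat),
  (m - 1) * B < \sum_(k < m) t k + m ->
  exists t0 x0 : nat -> nat, [/\ eqm K b (mk m t x w) (mk m t0 x0 0),
    (forall k, phiT b t0 x0 0 k = phiT b t x w k) & phiZ m x0 0 = phiZ m x w].
Proof.
elim: w => [|w IH] t x hdeg; first by exists t, x; split => //; exact: eqm_refl.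
have [i hi] : exists i : 'I_m, B - b i <= t i.
  case: (boolP [exists i : 'I_m, B - b i <= t i]) => [/existsP [i hi]|/existsPn hn].
    by exists i.
  have h1 : \sum_(k < m) (t k + 1) <= \sum_(k < m) (B - b k).
    by apply: leq_sum => k _; have := hn k; rewrite -ltnNge addn1.
  have h2 : \sum_(k < m) (B - b k) + B = m * B.
    rewrite {2}/bsum -big_split /=.
    rewrite (eq_bigr (fun _ => B)) => [|k _]; last by rewrite subnK // b_le.
    by rewrite sum_nat_const card_ord.
  move: h1; rewrite big_split /= sum_const1 => h1.
  have h3 : (m - 1) * B + B = m * B by rewrite -{2}(mul1n B) -mulnDl subnK.
  exfalso.
  move: hdeg h1 h2 h3; move: (\sum_(k < m) (B - b k)) (\sum_(i < m) t i) ((m - 1) * B) (m * B) => S T X Y; lia.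
pose bn := fun k : nat => b (insubd i k).
pose tA := fun k : nat => (B - b i) * (k == i). pose xA := fun _ : nat => 0.
pose tB := fun k : nat => bn k * (k != i). pose xB := fun k : nat => (k == i) : nat.
pose t1 := fun k => t k - tA k + tB k. pose x1 := fun k => x k - xA k + xB k.
have hphi : forall k, phiT b tA xA 1 k = phiT b tB xB 0 k.
  move=> k; rewrite /phiT /tA /xA /tB /xB /bn valKd.
  case: (eqVneq (k : nat) i) => [e|ne] /=.
    have -> : k = i by apply: val_inj.
    have := b_le b i; lia.
  lia.
have hZA : phiZ m xA 1 = 1 by rewrite /phiZ big1.
have hZB : phiZ m xB 0 = 1 by rewrite /phiZ addn0 sum_ind.
have hlet : forall k, k < m -> tA k <= t k.
  by move=> k _; rewrite /tA; case: eqP => [->|_]; rewrite ?muln1 ?muln0.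
have hlex : forall k, k < m -> xA k <= x k by [].
have hlew : 1 <= w.+1 by [].
have ht1 : forall k, k < m -> t1 k = t k - tA k + tB k by [].
have hx1 : forall k, k < m -> x1 k = x k - xA k + xB k by [].
have hw1 : w = w.+1 - 1 + 0 by rewrite subn1 addn0.
have e1 := tgen_eqm K hphi hZA hZB hlet hlex hlew ht1 hx1 hw1.
have eT := tgen_phiT hphi hZA hZB hlet hlex hlew ht1 hx1 hw1.
have eZ := tgen_phiZ hZA hZB hlex hlew hx1 hw1.
have hdeg1 : \sum_(k < m) t1 k = \sum_(k < m) t k.
  have s1 := sumT b t1 x1 w; have s2 := sumT b t x w.+1.
  have s3 : \sum_(k < m) phiT b t1 x1 w k = \sum_(k < m) phiT b t x w.+1 k.
    by apply: eq_bigr => k _; exact: eT k.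
  rewrite eZ s3 in s1; rewrite s1 in s2.
  move: s2; move: (B * phiZ m x w.+1) => Z; lia.
have [t0 [x0 [h1 h2 h3]]] := IH t1 x1 ltac:(by rewrite hdeg1).
exists t0, x0; split.
- exact: eqm_trans e1 h1.
- by move=> k; rewrite h2 eT.
- by rewrite h3 eZ.
Qed.

End Comb2.

Section Main.
Variables (K : fieldType) (m : nat) (b : 'I_m -> nat).
Local Notation n2 := (m + m).+1.
Local Notation B := (bsum b).
Local Notation S := (Sring K m).

Definition bigdeg (U : 'X_{1..n2}) := ((m - 1) * B < \sum_(k < m) U (inord k) + m)%N.

Lemma conn (hm : (0 < m)%N) U V : PhiM b U = PhiM b V -> bigdeg U -> bigdeg V -> eqm K b U V.
Proof.
move=> hP hU hV.
pose tU := fun i => U (inord i). pose xU := fun i => U (inord (m + i)). pose wU := U (inord (m + m)).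
pose tV := fun i => V (inord i). pose xV := fun i => V (inord (m + i)). pose wV := V (inord (m + m)).
have eU : U = mk m tU xU wU by rewrite mkK.
have eV : V = mk m tV xV wV by rewrite mkK.
have [hT hZ] : (forall k, phiT b tU xU wU k = phiT b tV xV wV k) /\ phiZ m xU wU = phiZ m xV wV.
  by apply: PhiM_eqE; rewrite -eU -eV.
have [t0 [x0 [e0 h0T h0Z]]] := wrem K hm wU (t := tU) xU hU.
have [t1 [x1 [e1 h1T h1Z]]] := wrem K hm wV (t := tV) xV hV.
rewrite eU eV; apply: eqm_trans e0 _; apply: eqm_trans _ (eqm_sym e1).
apply: (xconn K (n := (\sum_(k < m) (x0 k - x1 k))%N)) => //.
- by move=> k; rewrite h0T hT h1T.
- by rewrite h0Z hZ h1Z.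
Qed.

Lemma rees_mapM (p q : S) : rees_map b (p * q) = rees_map b p * rees_map b q.
Proof. exact: rmorphM. Qed.

Lemma rees_map_sumX (s : seq 'X_{1..n2}) (c : 'X_{1..n2} -> K) (F : 'X_{1..n2} -> 'X_{1..n2}) :
  rees_map b (\sum_(x <- s) c x *: ('X_[F x] : S)) = \sum_(x <- s) c x *: 'X_[PhiM b (F x)].
Proof.
rewrite /rees_map raddf_sum /=; apply: eq_bigr => x _.
by rewrite comp_mpolyZ -/(rees_map b _) rees_mapX.
Qed.

Lemma mpolyX_neq0 n (M : 'X_{1..n}) : ('X_[M] : {mpoly K[n]}) != 0.
Proof.
apply/eqP => /(congr1 (mcoeff M)); rewrite mcoeffX eqxx mcoeff0 /=.
by move/eqP; rewrite oner_eq0.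
Qed.

Lemma Tprod_X l : Tprod K m ^+ l = 'X_[((\sum_(i < m) U_(tvar i)) *+ l)%MM].
Proof. by rewrite /Tprod mprodXE mpolyXn. Qed.

End Main.


Lemma bound_lemma (m B l : nat) : (0 < m)%N -> ((m - 1) * (B - 1) <= m * l)%N ->
  ((m - 1) * B < m * l + m)%N.
Proof.
move=> hm; case: B => [|B]; first by rewrite muln0; lia.
rewrite subSS subn0 mulnS; lia.
Qed.

Unset Implicit Arguments.

Theorem corollary4p2 (K : fieldType) (m : nat) (b : 'I_m -> nat) (l : nat) :
  (3 <= m)%N ->
  (exists i j : 'I_m, [/\ i != j, b i != 0%N & b j != 0%N]) ->
  ((m - 1) * (bsum b - 1) <= m * l)%N ->
  forall g : {mpoly K[(m + m).+1]},
    in_colon (reesL1 b) (Tprod K m ^+ l) g <-> reesL b g.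
Proof.
move=> hm3 _ hl g.
have hm : (0 < m)%N by lia.
set D := ((\sum_(i < m) U_(tvar i)) *+ l)%MM.
have eT : Tprod K m ^+ l = 'X_[D] by rewrite Tprod_X.
split.
- move=> [s [hs he]]; rewrite /reesL.
  have : rees_map b (g * Tprod K m ^+ l) = 0.
    rewrite he /rees_map raddf_sum /= big_seq big1 // => x hx.
    rewrite -/(rees_map b _) rees_mapM; have [h _] := hs x hx.
    by rewrite /reesL in h; rewrite h mulr0.
  rewrite rees_mapM eT rees_mapX => /eqP; rewrite mulf_eq0 => /orP [/eqP //|].
  by rewrite (negbTE (mpolyX_neq0 _ _)).
- move=> hg; rewrite /in_colon eT.
  pose F := fun mon : 'X_{1..(m + m).+1} => (mon + D)%MM.
  have good : forall mon, bigdeg b (F mon).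
    move=> mon; rewrite /bigdeg.
    have h1 : (m * l <= \sum_(k < m) F mon (inord k))%N.
      have -> : (m * l = \sum_(k < m) l)%N by rewrite sum_nat_const card_ord.
      apply: leq_sum => k _; rewrite /F mnmDE /D mulmnE mnm_sumE.
      rewrite (bigD1 k) //= mnm1E /tvar eqxx /=; nia.
    have := bound_lemma hm hl; lia.
  pose nf := fun U : 'X_{1..(m + m).+1} =>
    epsilon (inhabits 0%MM) (fun V => PhiM b V = PhiM b U /\ bigdeg b V).
  have nf_spec : forall U, bigdeg b U -> PhiM b (nf U) = PhiM b U /\ bigdeg b (nf U).
    by move=> U hU; apply: (epsilon_spec (inhabits 0%MM) (fun V => PhiM b V = PhiM b U /\ bigdeg b V)); exists U.
  have nf_eq : forall U V, PhiM b U = PhiM b V -> nf U = nf V.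
    by move=> U V h; rewrite /nf h.
  have eg : g * 'X_[D] = \sum_(mon <- msupp g) g@_mon *: ('X_[F mon] : Sring K m).
    rewrite {1}(mpolyE g) mulr_suml; apply: eq_bigr => mon _.
    by rewrite -scalerAl -mpolyXD.
  rewrite eg.
  have -> : \sum_(mon <- msupp g) g@_mon *: ('X_[F mon] : Sring K m) =
    \sum_(mon <- msupp g) g@_mon *: ('X_[F mon] - 'X_[nf (F mon)]) +
    \sum_(mon <- msupp g) g@_mon *: ('X_[nf (F mon)] : Sring K m).
    by rewrite -big_split /=; apply: eq_bigr => mon _; rewrite scalerBr subrK.
  apply: idealD.
    apply: ideal_sum => mon _; rewrite -mul_mpolyC; apply: idealM.
    have [h1 h2] := nf_spec _ (good mon).
    exact: (conn K hm (esym h1) (good mon) h2).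
  have -> : \sum_(mon <- msupp g) g@_mon *: ('X_[nf (F mon)] : Sring K m) = 0; last exact: ideal0.
  apply/mpolyP => N; rewrite mcoeff0 raddf_sum /=.
  under eq_bigr do rewrite mcoeffZ mcoeffX.
  case: (boolP (has (fun mon => nf (F mon) == N) (msupp g))) => [/hasP [mon0 hmon0 /eqP e0] | /hasPn hn]; last first.
    by rewrite big_seq big1 // => mon /hn /negbTE ->; rewrite mulr0.
  have z : (rees_map b (g * 'X_[D]))@_(PhiM b (F mon0)) = 0.
    by rewrite rees_mapM hg mul0r mcoeff0.
  apply: (etrans _ z); rewrite eg rees_map_sumX raddf_sum /=.
  apply: eq_big_seq => mon hmon.
  rewrite mcoeffZ mcoeffX; congr (_ * (nat_of_bool _)%:R).
  rewrite -e0; apply/eqP/eqP => [h|h]; last exact: nf_eq.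
  by rewrite -(nf_spec _ (good mon)).1 h (nf_spec _ (good mon0)).1.
Qed.
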